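(* Let $\{c_n\}_{n\ge1}$ be a real sequence with $\sum_{n=1}^\infty (c_n)^2<+\infty$ and $\sum_{n=N}^\infty (c_n)^2>0$ for every $N\ge1$. If $$\lim_{N\to\infty}\frac{(c_N)^2}{\sum_{n=N}^\infty (c_n)^2}=0,$$ then $$\lim_{N\to\infty}\frac{\sup_{n\ge N}(c_n)^2}{\sum_{n=N}^\infty (c_n)^2}=0.$$ *)

(* Defs.v *)
From Stdlib Require Import Reals.
From Coquelicot Require Import Coquelicot.
Open Scope R_scope.

Definition tail_sq (c : nat -> R) (N : nat) : R :=
  Series (fun k => (c (N + k)%nat) ^ 2).

Definition tail_sup_sq (c : nat -> R) (N : nat) : Rbar :=
  Lub_Rbar (fun x => exists n : nat, (N <= n)%nat /\ x = (c n) ^ 2).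

(* Main.v *)
Require Import Defs.
From Stdlib Require Import Reals.
From Coquelicot Require Import Coquelicot.
From Stdlib Require Import Lra Lia.
Open Scope R_scope.

Section H.
Variable c : nat -> R.
Hypothesis Hex : ex_series (fun k => (c (1 + k)%nat) ^ 2).

Lemma ex_all N : ex_series (fun k => (c (N + k)%nat) ^ 2).
Proof.
  assert (H0 : ex_series (fun k => (c k) ^ 2)).
  { apply ex_series_incr_1. exact Hex. }
  apply (ex_series_incr_n (fun k => (c k)^2) N). exact H0.
Qed.

Lemma tail_nonneg N : 0 <= tail_sq c N.
Proof.
  unfold tail_sq.
  assert (Series (fun _ : nat => 0) = 0).
  { rewrite <- (Series_ext (fun n : nat => 0 * 0)) by (intros; ring). rewrite Series_scal_l. ring. }
  rewrite <- H. apply Series_le; [|apply ex_all].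
  intros n; split; [lra|]. apply pow2_ge_0.
Qed.

Lemma tail_step N : tail_sq c N = (c N)^2 + tail_sq c (S N).
Proof.
  unfold tail_sq. rewrite Series_incr_1 by apply ex_all.
  rewrite Nat.add_0_r. f_equal. apply Series_ext. intros k. f_equal. f_equal. lia.
Qed.

Lemma tail_mono N M : (N <= M)%nat -> tail_sq c M <= tail_sq c N.
Proof.
  induction 1; [lra|]. rewrite (tail_step m) in IHle. pose proof (pow2_ge_0 (c m)). lra.
Qed.

Lemma tail_ge N n : (N <= n)%nat -> (c n)^2 <= tail_sq c N.
Proof.
  intros H. pose proof (tail_mono N n H). rewrite tail_step in H0.
  pose proof (tail_nonneg (S n)). lra.
Qed.

Lemma sup_bound N B : (forall n, (N <= n)%nat -> (c n)^2 <= B) ->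
  is_finite (tail_sup_sq c N) /\ 0 <= real (tail_sup_sq c N) <= B.
Proof.
  intros HB. unfold tail_sup_sq.
  destruct (Lub_Rbar_correct (fun x => exists n : nat, (N <= n)%nat /\ x = (c n) ^ 2)) as [Hub Hl].
  assert (H1 : Rbar_le (Lub_Rbar (fun x => exists n : nat, (N <= n)%nat /\ x = (c n) ^ 2)) (Finite B)).
  { apply Hl. intros x [n [Hn ->]]. simpl. apply HB; auto. }
  assert (H2 : Rbar_le (Finite ((c N)^2)) (Lub_Rbar (fun x => exists n : nat, (N <= n)%nat /\ x = (c n) ^ 2))).
  { apply Hub. exists N; split; auto. }
  destruct (Lub_Rbar (fun x => exists n : nat, (N <= n)%nat /\ x = (c n) ^ 2)); simpl in *; try contradiction.
  split; [reflexivity|]. pose proof (pow2_ge_0 (c N)). lra.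
Qed.
End H.

Theorem lemma2p5 (c : nat -> R) :
  ex_series (fun k => (c (1 + k)%nat) ^ 2) ->
  (forall N : nat, (1 <= N)%nat -> tail_sq c N > 0) ->
  is_lim_seq (fun N => (c N) ^ 2 / tail_sq c N) 0 ->
  (forall N : nat, (1 <= N)%nat -> is_finite (tail_sup_sq c N)) /\
  is_lim_seq (fun N => real (tail_sup_sq c N) / tail_sq c N) 0.
Proof.
  intros Hex Hpos Hlim. split.
  - intros N _. apply (sup_bound c N (tail_sq c N)). intros n Hn. apply tail_ge; auto.
  - apply is_lim_seq_spec in Hlim. apply is_lim_seq_spec. intros eps.
    assert (He2 : 0 < eps/2) by (destruct eps; simpl; lra).
    destruct (Hlim (mkposreal _ He2)) as [N0 HN0]. simpl in HN0.
    exists (max N0 1). intros N HN.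
    assert (HT : tail_sq c N > 0) by (apply Hpos; lia).
    assert (Hb : forall n, (N <= n)%nat -> (c n)^2 <= eps/2 * tail_sq c N).
    { intros n Hn. assert (HTn : tail_sq c n > 0) by (apply Hpos; lia).
      specialize (HN0 n ltac:(lia)). rewrite Rminus_0_r in HN0.
      pose proof (tail_mono c Hex N n Hn).
      assert ((c n)^2 / tail_sq c n < eps/2) by (eapply Rle_lt_trans; [apply Rle_abs|exact HN0]).
      apply Rmult_lt_compat_r with (r := tail_sq c n) in H0; [|lra].
      unfold Rdiv in H0. rewrite Rmult_assoc, Rinv_l, Rmult_1_r in H0 by lra.
      nra. }
    destruct (sup_bound c N _ Hb) as [_ [H0 H1]].
    rewrite Rminus_0_r, Rabs_pos_eq.
    + apply Rle_lt_trans with (eps/2).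
      * apply Rmult_le_reg_r with (tail_sq c N); [lra|].
        unfold Rdiv. rewrite Rmult_assoc, Rinv_l, Rmult_1_r by lra. lra.
      * destruct eps; simpl; lra.
    + apply Rmult_le_pos; [lra|]. apply Rlt_le, Rinv_0_lt_compat; lra.
Qed.
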